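(* Let $\mathcal X\subseteq\mathbb R^{d'}$, $d'\in\mathbb N$, and let $\mu$ be a probability measure on $\mathcal X$. Let $\sigma_h:\mathbb R\to\mathbb R$ be bounded, differentiable with $\sigma_h(0)=0$, $\sigma_h'(0)\neq0$ and $\sigma_h'$ bounded and Lipschitz. Let $\Phi=\{\phi_\theta:\theta\in\Theta\}\subseteq L^2(\mu)\cap L^\infty(\mu)$ be star-shaped at $0$ (i.e. $\lambda\phi\in\Phi$ for all $\phi\in\Phi$, $\lambda\in[0,1]$) and such that $\mathrm{span}\{\phi_\theta:\theta\in\Theta\}$ is dense in $L^2(\mu)$. Then $\mathrm{span}\{\sigma_h\circ\phi_\theta:\theta\in\Theta\}$ is dense in $L^2(\mu)$. *)

(* Defs.v *)
From HB Require Import structures.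
From mathcomp Require Import all_boot all_order all_algebra.
From mathcomp Require Import all_classical all_reals all_analysis.
Set Implicit Arguments. Unset Strict Implicit. Unset Printing Implicit Defensive.
Import Order.TTheory GRing.Theory Num.Theory.
Import numFieldNormedType.Exports.
Local Open Scope classical_set_scope.
Local Open Scope ring_scope.

Definition Rn (R : realType) (n : nat) := g_sigma_algebraType (@open 'rV[R]_n).

Section defs.
Context {d} {T : measurableType d} {R : realType}.
Variable mu : {measure set T -> \bar R}.

Definition L2 (f : T -> R) : Prop :=
  measurable_fun setT f /\ (Lnorm mu 2%:E (fun x => (f x)%:E) < +oo)%E.

Definition Linfty (f : T -> R) : Prop :=
  measurable_fun setT f /\ exists M : R, {ae mu, forall x, `|f x| <= M}.

Definition in_span {Theta : Type} (phi : Theta -> T -> R) (g : T -> R) : Prop :=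
  exists (n : nat) (c : 'I_n -> R) (t : 'I_n -> Theta),
    g = fun x => \sum_(i < n) c i * phi (t i) x.

Definition L2_dense_span {Theta : Type} (phi : Theta -> T -> R) : Prop :=
  forall f : T -> R, L2 f -> forall eps : R, 0 < eps ->
    exists g : T -> R, in_span phi g /\
      (Lnorm mu 2%:E (fun x => (f x - g x)%:E) < eps%:E)%E.

(* Phi = {phi t} is star-shaped at 0 (as a subset of L^2(mu)) *)
Definition star_shaped0 {Theta : Type} (phi : Theta -> T -> R) : Prop :=
  forall (t : Theta) (lam : R), 0 <= lam <= 1 ->
    exists t' : Theta, {ae mu, forall x, phi t' x = lam * phi t x}.
End defs.

(* Main.v *)
Require Import Defs.
From HB Require Import structures.
From mathcomp Require Import all_boot all_order all_algebra.
From mathcomp Require Import all_classical all_reals all_analysis.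
From mathcomp Require Import ring lra measurable_realfun.
Import Order.TTheory GRing.Theory Num.Theory.
Import numFieldNormedType.Exports.
Local Open Scope classical_set_scope.
Local Open Scope ring_scope.

Lemma taylor1 (R : realType) (sigma : R -> R) (L : R) :
  (forall x, derivable sigma x 1) ->
  (forall x y, `|derive1 sigma x - derive1 sigma y| <= L * `|x - y|) ->
  forall y, `|sigma y - sigma 0 - derive1 sigma 0 * y| <= `|L| * (`|y| * `|y|).
Proof.
move=> ds Ls.
have key : forall a b : R, a < b -> (a = 0 \/ b = 0) ->
   exists2 c, `|c| <= `|b - a| & sigma b - sigma a = derive1 sigma c * (b - a).
  move=> a b ab ab0.
  have [c cab ->] := @MVT R sigma (derive1 sigma) a b ab
     (fun x _ => ltac:(rewrite derive1E; exact: derivableP (ds x))) 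
     (derivable_within_continuous (fun x _ => ds x)).
  exists c => //.
  move: cab; rewrite in_itv /= => /andP[ac cb].
  case: ab0 => [a0|b0]; subst.
    by rewrite subr0 !gtr0_norm ?(lt_trans ac cb) // ltW.
  by rewrite sub0r normrN !ltr0_norm ?(lt_trans ac cb) // lerN2 ltW.
have bnd : forall c y : R, `|c| <= `|y| -> `|derive1 sigma c - derive1 sigma 0| <= `|L| * `|y|.
  move=> c y cy; have h := Ls c 0; rewrite subr0 in h.
  apply: (le_trans h); apply: (le_trans (ler_norm _)); rewrite normrM.
  by rewrite normr_id; apply: ler_wpM2l.
move=> y; case: (ltgtP y 0) => [y0|y0|->]; last first.
- by rewrite subrr mulr0 subr0 normr0 mulr_ge0.
- have [c cy e] := key 0 y y0 (or_introl erefl).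
  rewrite subr0 in e cy; rewrite e -mulrBl normrM mulrA.
  apply: ler_wpM2r => //; exact: bnd.
- have [c cy e] := key y 0 y0 (or_intror erefl).
  rewrite sub0r normrN in cy.
  have -> : sigma y - sigma 0 - derive1 sigma 0 * y = (derive1 sigma c - derive1 sigma 0) * y.
    have e' : sigma y = sigma 0 - derive1 sigma c * (0 - y) by rewrite -e; ring.
    rewrite e'; ring.
  rewrite normrM mulrA; apply: ler_wpM2r => //; exact: bnd.
Qed.

Lemma Lnorm2_bound d (T : measurableType d) (R : realType)
  (mu : probability T R) (E : T -> R) (C : R) :
  measurable_fun setT E -> 0 <= C ->
  {ae mu, forall x, `|E x| <= C} ->
  (Lnorm mu 2%:E (fun x => (E x)%:E) <= C%:E)%E.
Proof.
move=> mE C0 aeE.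
rewrite unlock /=.
have step : (\int[mu]_x ((`|E x| `^ 2)%:E) <= (C `^ 2)%:E)%E.
  have -> : ((C `^ 2)%:E = \int[mu]_x (cst (C `^ 2)%:E) x)%E.
    have h1 : mu setT = 1%E := probability_setT mu.
    rewrite integral_cst // [X in (_ * X)%E](_ : _ = 1%E) ?mule1 //; exact: h1.
  apply: (@ae_ge0_le_integral _ _ _ mu setT measurableT) => //.
  - apply/measurable_EFinP.
    apply: (@measurableT_comp _ _ _ _ _ _ (@powR R ^~ 2)) => //.
    exact: measurableT_comp.
  - by move=> x _; rewrite lee_fin powR_ge0.
  - apply: filterS aeE => x Ex _ /=.
    rewrite lee_fin.
    by apply: ge0_ler_powR => //; rewrite nnegrE.
apply: (le_trans (gt0_ler_poweR _ _ _ step)).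
- by rewrite invr_ge0.
- rewrite in_itv /= leey andbT; apply: integral_ge0 => x _; by rewrite lee_fin powR_ge0.
- by rewrite in_itv /= lee_fin powR_ge0 leey.
rewrite poweR_EFin -powRrM mulfV // powRr1 //.
Qed.

Theorem mainTheorem5 (R : realType) (d' : nat) (X : set (Rn R d'))
    (mu : probability (Rn R d') R)
    (sigma : R -> R) (Theta : Type) (phi : Theta -> Rn R d' -> R) :
  mu.-negligible (~` X) ->
  (exists M : R, forall x, `|sigma x| <= M) ->
  (forall x, derivable sigma x 1) ->
  sigma 0 = 0 ->
  derive1 sigma 0 != 0 ->
  (exists M : R, forall x, `|derive1 sigma x| <= M) ->
  (exists L : R, forall x y, `|derive1 sigma x - derive1 sigma y| <= L * `|x - y|) ->
  (forall t, L2 mu (phi t) /\ Linfty mu (phi t)) ->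
  star_shaped0 mu phi ->
  L2_dense_span mu phi ->
  L2_dense_span mu (fun t => sigma \o phi t).
Proof.
move=> _ _ ds s00 s0ne _ [L HL] hphi star dense f Lf eps eps0.
have [g [[n [c [t ->]]] Hg]] := dense f Lf (eps / 2) ltac:(by rewrite divr_gt0).
set s0 := derive1 sigma 0.
have s0pos : 0 < `|s0| by rewrite normr_gt0.
have mphi : forall th, measurable_fun setT (phi th) by move=> th; case: (hphi th) => [[]].
have /choice [M HM] : forall i : 'I_n, exists M : R,
    {ae mu, forall x, `|phi (t i) x| <= M}.
  by move=> i; case: (hphi (t i)) => _ [].
set B := \sum_(i < n) `|c i| * M i ^+ 2.
have B0 : 0 <= B by apply: sumr_ge0 => i _; rewrite mulr_ge0 // sqr_ge0.
set Q := `|L| * B.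
have Q0 : 0 <= Q by rewrite mulr_ge0.
set lam := Num.min 1 (eps * `|s0| / (4 * (Q + 1))).
have lam0 : 0 < lam.
  by rewrite lt_min ltr01 /= divr_gt0 // ?mulr_gt0 // ltr_wpDl.
have lam1 : lam <= 1 by rewrite ge_min lexx.
have lamb : lam * (4 * (Q + 1)) <= eps * `|s0|.
  rewrite -ler_pdivlMr; last by rewrite mulr_gt0 // ltr_wpDl.
  by rewrite ge_min lexx orbT.
have /choice [t' Ht'] : forall i : 'I_n, exists t' : Theta,
    {ae mu, forall x, phi t' x = lam * phi (t i) x}.
  by move=> i; apply: star; rewrite (ltW lam0) lam1.
have scont : continuous sigma.
  move=> z; apply/differentiable_continuous; rewrite -derivable1_diffP; exact: ds.
have msig : measurable_fun setT sigma by exact: continuous_measurable_fun.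
exists (fun x => \sum_(i < n) (c i / (lam * s0)) * (sigma \o phi (t' i)) x).
split; first by exists n, (fun i => c i / (lam * s0)), t'.
set G := fun x => \sum_(i < n) c i * phi (t i) x.
set E := fun x => G x - \sum_(i < n) (c i / (lam * s0)) * (sigma \o phi (t' i)) x.
have mG : measurable_fun setT G.
  by apply: measurable_sum => i; apply: measurable_funM => //; exact: measurable_cst.
have mE : measurable_fun setT E.
  apply: measurable_funB => //; apply: measurable_sum => i.
  apply: measurable_funM; first exact: measurable_cst.
  exact: measurableT_comp.
have mfg : measurable_fun setT (fun x => f x - G x).
  by apply: measurable_funB => //; case: Lf.
have EB : {ae mu, forall x, `|E x| <= Q * lam / `|s0|}.
  have aeF : Filter (almost_everywhere mu) := ae_filter_ringOfSetsType mu.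
  have h2 := @filter_forall _ 'I_n (fun i x => `|phi (t i) x| <= M i) _ aeF HM.
  have h1 := @filter_forall _ 'I_n (fun i x => phi (t' i) x = lam * phi (t i) x) _ aeF Ht'.
  apply: (filterS2 aeF _ h1 h2) => x H1 H2.
  rewrite /E /G -sumrB.
  apply: (le_trans (ler_norm_sum _ _ _)).
  rewrite (_ : Q * lam / `|s0| = \sum_(i < n) `|c i| * M i ^+ 2 * (`|L| * lam / `|s0|)); last first.
    by rewrite -mulr_suml /Q /B; field; rewrite normr_eq0.
  apply: ler_sum => i _ /=.
  rewrite H1.
  set y := phi (t i) x.
  have Ty := @taylor1 R sigma L ds HL (lam * y).
  rewrite s00 subr0 -/s0 in Ty.
  have lamn0 : lam != 0 by rewrite gt_eqF.
  have e : c i * y - c i / (lam * s0) * sigma (lam * y) =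
      - (c i / (lam * s0)) * (sigma (lam * y) - s0 * (lam * y)).
    by field; rewrite lamn0 s0ne.
  rewrite e normrM normrN.
  apply: (le_trans (ler_wpM2l _ Ty)); first exact: normr_ge0.
  have ly : `|lam * y| = lam * `|y| by rewrite normrM gtr0_norm.
  have cc : `|c i / (lam * s0)| = `|c i| / (lam * `|s0|).
    by rewrite normrM normfV normrM (gtr0_norm lam0).
  rewrite ly cc.
  rewrite (_ : `|c i| / (lam * `|s0|) * (`|L| * (lam * `|y| * (lam * `|y|))) =
     `|c i| * (`|y| * `|y|) * (`|L| * lam / `|s0|)); last first.
    by field; rewrite lamn0 normr_eq0 s0ne.
  apply: ler_wpM2r; first by rewrite divr_ge0 // mulr_ge0 // ltW.
  apply: ler_wpM2l => //.
  have := H2 i; rewrite -/y => yM.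
  rewrite expr2; apply: ler_pM => //.
have C0 : 0 <= Q * lam / `|s0| by rewrite divr_ge0 // mulr_ge0 // ltW.
have Ceps : Q * lam / `|s0| <= eps / 4.
  rewrite ler_pdivrMr //.
  nra.
have NE := @Lnorm2_bound _ _ _ mu E _ mE C0 EB.
have -> : (fun x => (f x - \sum_(i < n) c i / (lam * s0) * (sigma \o phi (t' i)) x)%:E)
    = EFin \o ((fun x => f x - G x) \+ E).
  by apply/funext => x /=; rewrite /E; congr EFin; ring.
apply: (le_lt_trans (@minkowski_EFin _ _ _ mu _ _ 2 mfg mE _)); first by rewrite ler1n.
have Hg' : (Lnorm mu 2%:E (EFin \o (fun x => (f x - G x)%R)) < (eps / 2)%:E)%E by exact: Hg.
have NEfin : Lnorm mu 2%:E (EFin \o E) \is a fin_num.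
  by rewrite ge0_fin_numE ?Lnorm_ge0 // (le_lt_trans NE) // ltry.
apply: (lt_le_trans (lte_leD NEfin Hg' (le_trans NE (_ : (Q * lam / `|s0|)%:E <= (eps / 4)%:E)%E))).
  by rewrite lee_fin.
rewrite -EFinD lee_fin; lra.
Qed.
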